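(* Suppose $\|\nabla f(w;z)\|\le G$ for all $w\in\mathcal{K}$, $z\in\Omega$. Let $T\in\mathbb{N}$ and $K=\tau_{\mathrm{mix}}\lceil2\log_2T\rceil$. For $N\in\mathbb{N}$ let $g_t^N=\frac1N\sum_{i=1}^N\nabla f(w_t;z_t^{(i)})$. Then for every $N\in\{1,\dots,T\}$ and every $\mathcal{F}_{t-1}$-measurable $w_t\in\mathcal{K}$, \[ \mathbb{E}\big[\|g_t^N-\nabla F(w_t)\|\big]\le\tilde{\mathcal{O}}\Big(G\sqrt{\tfrac KN}\Big) \quad\text{and}\quad \mathbb{E}\big[\|g_t^N-\nabla F(w_t)\|^2\big]\le\tilde{\mathcal{O}}\Big(\tfrac{G^2K}{N}\Big). \]
   Context: Let $\Omega$ be a finite set and $(z_k)_{k\ge1}$ an ergodic time-homogeneous Markov chain on $\Omega$ (arbitrary initial distribution) with stationary distribution $\mu$. For probability measures $P,Q$ on $\Omega$, $\|P-Q\|_{TV}=\sup_A|P(A)-Q(A)|$; $P^s(z,\cdot)$ is the law of $z_{s+1}$ given $z_1=z$, $d_{\mathrm{mix}}(s)=\sup_z\|P^s(z,\cdot)-\mu\|_{TV}$, and $\tau_{\mathrm{mix}}=\inf\{s:d_{\mathrm{mix}}(s)\le1/4\}$. $\mathcal{K}\subseteq\mathbb{R}^d$; $f(\cdot;z)$ is differentiable and $F(w)=\mathbb{E}_{z\sim\mu}[f(w;z)]$. Samples are grouped by iterations: positive integers $N_1,N_2,\dots$ are drawn independently of the chain (each $N_s=2^{J_s}$ with $\mathbb{P}(J_s=j)=2^{-j}$,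 $j\ge1$, independently), and $z_t^{(i)}=z_{S_{t-1}+i}$ for $i\ge1$, where $S_{t-1}=N_1+\dots+N_{t-1}$. $\mathcal{F}_{t-1}$ is the $\sigma$-field generated by $N_1,\dots,N_{t-1}$ and the samples $z_s^{(i)}$, $s\le t-1$, $i\le N_s$. The notation $\tilde{\mathcal{O}}(X)$ means a quantity bounded by $c\cdot X$ times a factor polylogarithmic in $T$, $K$ and $N$, with $c$ an absolute constant. *)

(* Defs.v *)
From mathcomp Require Import all_boot all_order all_algebra.
From mathcomp Require Import all_classical all_reals all_analysis.
Import Order.TTheory GRing.Theory Num.Theory.
Import numFieldNormedType.Exports.
Set Implicit Arguments. Unset Strict Implicit. Unset Printing Implicit Defensive.
Local Open Scope ring_scope.

Section Defs.
Variable R : realType.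

Definition enorm (d : nat) (v : 'rV[R]_d) : R := Num.sqrt (\sum_(i < d) v ord0 i ^+ 2).

Definition grad (d : nat) (h : 'rV[R]_d -> R) (w : 'rV[R]_d) : 'rV[R]_d :=
  \row_(i < d) derive h w (delta_mx ord0 i).

Variable Omega : finType.

Definition is_distr (p : Omega -> R) : Prop :=
  (forall x, 0 <= p x) /\ \sum_x p x = 1.

Definition is_stochastic (P : Omega -> Omega -> R) : Prop :=
  forall x, is_distr (P x).

Fixpoint Ppow (P : Omega -> Omega -> R) (s : nat) : Omega -> Omega -> R :=
  match s with
  | 0 => fun x y => if x == y then 1 else 0
  | s'.+1 => fun x y => \sum_u Ppow P s' x u * P u y
  end.

Definition irreducible (P : Omega -> Omega -> R) : Prop :=
  forall x y, exists s, 0 < Ppow P s x y.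

Definition aperiodic (P : Omega -> Omega -> R) : Prop :=
  forall x (p : nat), (forall n, (0 < n)%N -> 0 < Ppow P n x x -> (p %| n)%N) -> p = 1%N.

Definition ergodic (P : Omega -> Omega -> R) : Prop :=
  is_stochastic P /\ irreducible P /\ aperiodic P.

Definition is_stationary (P : Omega -> Omega -> R) (mu : Omega -> R) : Prop :=
  is_distr mu /\ forall y, \sum_x mu x * P x y = mu y.

Definition tv_dist (p q : Omega -> R) : R :=
  \big[Num.max/0]_(A : {set Omega}) `|\sum_(x in A) p x - \sum_(x in A) q x|.

Definition d_mix (P : Omega -> Omega -> R) (mu : Omega -> R) (s : nat) : R :=
  \big[Num.max/0]_(z : Omega) tv_dist (Ppow P s z) mu.

Definition is_tau_mix (P : Omega -> Omega -> R) (mu : Omega -> R) (tau : nat) : Prop :=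
  d_mix P mu tau <= 4^-1 /\ forall s, (s < tau)%N -> 4^-1 < d_mix P mu s.

Definition path_prob (p0 : Omega -> R) (P : Omega -> Omega -> R) (L : nat)
  (z : {ffun 'I_L -> Omega}) : R :=
  match L return {ffun 'I_L -> Omega} -> R with
  | 0 => fun _ => 1
  | L'.+1 => fun z =>
      p0 (z ord0) * \prod_(k < L') P (z (widen_ord (leqnSn L') k)) (z (lift ord0 k))
  end z.

(** Realisation of N_1, ..., N_m from J_s = j_s + 1 (j_s : nat), N_s = 2^J_s *)
Definition Ns (m : nat) (j : {ffun 'I_m -> nat}) : seq nat :=
  [seq (2 ^ (j s).+1)%N | s <- enum 'I_m].

Definition Nprob (m : nat) (j : {ffun 'I_m -> nat}) : R :=
  \prod_(s < m) (2 ^+ (j s).+1)^-1.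

Definition Ssum (m : nat) (j : {ffun 'I_m -> nat}) : nat := sumn (Ns j).

(** E[ X ] where X depends on N_1..N_m and the first L(j) states of the chain. *)
Definition expect (p0 : Omega -> R) (P : Omega -> Omega -> R) (m : nat)
  (L : {ffun 'I_m -> nat} -> nat)
  (X : forall j : {ffun 'I_m -> nat}, {ffun 'I_(L j) -> Omega} -> R) : \bar R :=
  \esum_(j in [set: {ffun 'I_m -> nat}])
     (Nprob j * \sum_(z : {ffun 'I_(L j) -> Omega}) path_prob p0 P z * X j z)%:E.

End Defs.

Section Iterate.
Variables (R : realType) (Omega : finType) (d : nat).

Definition Fobj (mu : Omega -> R) (f : Omega -> 'rV[R]_d -> R) (w : 'rV[R]_d) : R :=
  \sum_z mu z * f z w.

(** w_t = W(N_1..N_{t-1}, z_1..z_{S_{t-1}}) : an F_{t-1}-measurable iterate *)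
Definition w_t (m : nat) (W : seq nat -> seq Omega -> 'rV[R]_d)
  (j : {ffun 'I_m -> nat}) (L : nat) (z : {ffun 'I_L -> Omega}) : 'rV[R]_d :=
  W (Ns j) (take (Ssum j) (val (fgraph z))).

Definition g_tN (f : Omega -> 'rV[R]_d -> R) (m : nat) (W : seq nat -> seq Omega -> 'rV[R]_d)
  (N : nat) (j : {ffun 'I_m -> nat}) (L : nat) (z : {ffun 'I_L -> Omega}) : 'rV[R]_d :=
  (N%:R)^-1 *: \sum_(x <- drop (Ssum j) (val (fgraph z))) grad (f x) (w_t W j z).

End Iterate.

Arguments expect {R Omega} p0 P m L X.

(* Main.v *)
Require Import Defs.
From mathcomp Require Import all_boot all_order all_algebra.
From mathcomp Require Import all_classical all_reals all_analysis.
Import Order.TTheory GRing.Theory Num.Theory.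
Import numFieldNormedType.Exports.
From mathcomp Require Import ring lra zify.
Local Open Scope ring_scope.
Set Implicit Arguments. Unset Strict Implicit. Unset Printing Implicit Defensive.

Section Chain.
Variables (R : realType) (Omega : finType) (P : Omega -> Omega -> R).
Hypothesis Pst : is_stochastic P.

Fixpoint Ex (q : Omega -> R) (n : nat) (F : seq Omega -> R) : R :=
  match n with 0 => F [::] | n'.+1 => \sum_x q x * Ex (P x) n' (fun s => F (x :: s)) end.

Lemma Ex_ext q n F G : (forall s, size s = n -> F s = G s) -> Ex q n F = Ex q n G.
Proof.
elim: n q F G => [|n IH] q F G H /=; first by rewrite H.
by apply: eq_bigr => x _; congr (_ * _); apply: IH => s Hs; rewrite H //= Hs.
Qed.

Lemma ExD q n F G : Ex q n (fun s => F s + G s) = Ex q n F + Ex q n G.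
Proof.
elim: n q F G => [|n IH] q F G //=; rewrite -big_split /=.
by apply: eq_bigr => x _; rewrite IH mulrDr.
Qed.

Lemma ExZ q n c F : Ex q n (fun s => c * F s) = c * Ex q n F.
Proof.
elim: n q F => [|n IH] q F //=; rewrite mulr_sumr.
by apply: eq_bigr => x _; rewrite IH mulrCA.
Qed.

Lemma Ex_const q n c : is_distr q -> Ex q n (fun _ => c) = c.
Proof.
elim: n q => [|n IH] q [q0 q1] //=.
rewrite (eq_bigr (fun x => q x * c)); last by move=> x _; rewrite IH.
by rewrite -mulr_suml q1 mul1r.
Qed.

Lemma Ex_le q n F G : (forall x, 0 <= q x) ->
  (forall s, size s = n -> F s <= G s) -> Ex q n F <= Ex q n G.
Proof.
elim: n q F G => [|n IH] q F G q0 H /=; first exact: H.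
apply: ler_sum => x _; apply: ler_wpM2l => //; apply: IH.
  by move=> y; case: (Pst x) => + _; apply.
by move=> s Hs; apply: H; rewrite /= Hs.
Qed.

Fixpoint nxt (q : Omega -> R) (s : seq Omega) : Omega -> R :=
  match s with [::] => q | x :: s' => nxt (P x) s' end.

Lemma nxt_distr q s : is_distr q -> is_distr (nxt q s).
Proof. elim: s q => [|x s IH] q //= _; exact: IH. Qed.

Lemma Ex_split q a b F :
  Ex q (a + b) F = Ex q a (fun s => Ex (nxt q s) b (fun s' => F (s ++ s'))).
Proof.
elim: a q F => [|a IH] q F //=.
by apply: eq_bigr => x _; rewrite IH.
Qed.

Lemma Ppow_add s t x y :
  Ppow P (s + t) x y = \sum_u Ppow P s x u * Ppow P t u y.
Proof.
elim: t y => [|t IH] y /=.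
  rewrite addn0 (bigD1 y) //= eqxx mulr1 big1 ?addr0 // => u /negbTE ->.
  by rewrite mulr0.
rewrite addnS /=.
under eq_bigr do rewrite IH mulr_suml.
rewrite exchange_big /=; apply: eq_bigr => u _.
by rewrite mulr_sumr; apply: eq_bigr => v _; rewrite mulrA.
Qed.

Lemma Ppow1 x y : Ppow P 1 x y = P x y.
Proof.
rewrite /= (bigD1 x) //= eqxx mul1r big1 ?addr0 // => u.
by rewrite eq_sym => /negbTE ->; rewrite mul0r.
Qed.

Lemma PpowS x y k : Ppow P k.+1 x y = \sum_u P x u * Ppow P k u y.
Proof. by rewrite -add1n Ppow_add; under eq_bigr do rewrite Ppow1. Qed.

Lemma Ppow_distr k x : is_distr (Ppow P k x).
Proof.
elim: k x => [|k IH] x.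
  split=> [y|] /=; first by case: eqP.
  rewrite (bigD1 x) //= eqxx big1 ?addr0 // => u; rewrite eq_sym => /negbTE -> //.
split=> [y|] /=.
  apply: sumr_ge0 => u _; apply: mulr_ge0; first by case: (IH x) => + _; apply.
  by case: (Pst u) => + _; apply.
rewrite exchange_big /=.
under eq_bigr do rewrite -mulr_sumr (proj2 (Pst _)) mulr1.
by case: (IH x).
Qed.

Lemma stat_pow mu k y : is_stationary P mu ->
  \sum_x mu x * Ppow P k x y = mu y.
Proof.
move=> [_ Hs]; elim: k y => [|k IH] y /=.
  rewrite (bigD1 y) //= eqxx mulr1 big1 ?addr0 // => u /negbTE ->; by rewrite mulr0.
under eq_bigr do rewrite mulr_sumr.
rewrite exchange_big /=; rewrite -[RHS]Hs; apply: eq_bigr => u _.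
by rewrite -IH mulr_suml; apply: eq_bigr => v _; rewrite mulrA.
Qed.

Lemma Ex_marg q n (phi : Omega -> R) : is_distr q ->
  Ex q n (fun s => \sum_(y <- s) phi y) =
  \sum_(k < n) \sum_y (\sum_x q x * Ppow P k x y) * phi y.
Proof.
elim: n q => [|n IH] q qd /=; first by rewrite big_nil big_ord0.
rewrite big_ord_recl /=.
under eq_bigr => x _.
  rewrite (@Ex_ext (P x) n _ (fun s => phi x + \sum_(y <- s) phi y)); last first.
    by move=> s _; rewrite big_cons.
  rewrite ExD Ex_const; last exact: Pst.
  rewrite IH; last exact: Pst.
  over.
under eq_bigr do rewrite mulrDr.
rewrite big_split /=; congr (_ + _).
  apply: eq_bigr => y _; rewrite mulr_suml (bigD1 y) //= eqxx mulr1 big1 ?addr0 //.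
  by move=> u /negbTE ->; rewrite mulr0 mul0r.
rewrite (eq_bigr (fun x => \sum_(k < n) q x * \sum_y (\sum_u P x u * Ppow P k u y) * phi y)); last first.
  by move=> x _; rewrite mulr_sumr.
rewrite exchange_big /=; apply: eq_bigr => k _.
rewrite add0n.
have E y x : \sum_u Ppow P k x u * P u y = Ppow P k.+1 x y by [].
under [RHS]eq_bigr => y _ do under eq_bigr => x _ do rewrite E PpowS.
under eq_bigr do rewrite mulr_sumr.
rewrite exchange_big /=; apply: eq_bigr => y _.
rewrite mulr_suml; apply: eq_bigr => x _.
by rewrite mulrA.
Qed.

End Chain.

Section Ffun.
Variable (T : finType).

Definition fcons n (x : T) (z : {ffun 'I_n -> T}) : {ffun 'I_n.+1 -> T} :=
  [ffun i => if unlift ord0 i is Some j then z j else x].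

Lemma fcons0 n x (z : {ffun 'I_n -> T}) : fcons x z ord0 = x.
Proof. by rewrite ffunE unlift_none. Qed.

Lemma fconsS n x (z : {ffun 'I_n -> T}) j : fcons x z (lift ord0 j) = z j.
Proof. by rewrite ffunE liftK. Qed.

Lemma sum_fcons (R : nmodType) n (G : {ffun 'I_n.+1 -> T} -> R) :
  \sum_(z : {ffun 'I_n.+1 -> T}) G z = \sum_x \sum_(z : {ffun 'I_n -> T}) G (fcons x z).
Proof.
rewrite pair_big /=.
rewrite (reindex (fun p : T * {ffun 'I_n -> T} => fcons p.1 p.2)) //.
exists (fun z : {ffun 'I_n.+1 -> T} => (z ord0, [ffun j : 'I_n => z (lift ord0 j)])) => [[x z] _ | z _] /=.
  rewrite fcons0; congr (_, _); apply/ffunP => j; by rewrite !ffunE liftK.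
apply/ffunP => i; rewrite ffunE; case: (unliftP ord0 i) => [j ->|->] //.
by rewrite ffunE.
Qed.

Lemma fgraph_fcons n x (z : {ffun 'I_n -> T}) :
  val (fgraph (fcons x z)) = x :: val (fgraph z).
Proof.
change (tval (fgraph (fcons x z)) = x :: tval (fgraph z)).
rewrite -!codom_ffun !codomE enum_ordSl /= fcons0 -map_comp; congr (_ :: _).
by apply: eq_map => j /=; rewrite fconsS.
Qed.

Lemma sum_ffun0 (R : nmodType) (G : {ffun 'I_0 -> T} -> R) :
  \sum_(z : {ffun 'I_0 -> T}) G z = G (@ffun0 _ (fun _ => T) (card_ord 0)).
Proof.
rewrite (bigD1 (@ffun0 _ (fun _ => T) (card_ord 0))) //= big1 ?addr0 // => z /eqP []. 
by apply/ffunP => -[].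
Qed.

Lemma fgraph0 (z : {ffun 'I_0 -> T}) : val (fgraph z) = [::].
Proof. by change (tval (fgraph z) = [::]); rewrite -codom_ffun codomE enum_ord0. Qed.

End Ffun.

Section PathP.
Variables (R : realType) (Omega : finType) (P : Omega -> Omega -> R).

Lemma path_prob_fcons q n x (z : {ffun 'I_n -> Omega}) :
  path_prob q P (fcons x z) = q x * path_prob (P x) P z.
Proof.
case: n z => [|n] z; rewrite /path_prob; cbv beta iota.
  by rewrite !big_ord0 !mulr1 fcons0.
rewrite big_ord_recl.
rewrite (_ : widen_ord _ ord0 = ord0); last exact: val_inj.
rewrite !fcons0 fconsS; congr (_ * (_ * _)).
apply: eq_bigr => k _.
rewrite (_ : widen_ord _ (lift ord0 k) = lift ord0 (widen_ord (leqnSn n) k)); last exact: val_inj.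
by rewrite !fconsS.
Qed.

End PathP.

Lemma Ex_path (R : realType) (Omega : finType) (P : Omega -> Omega -> R) q n
  (F : seq Omega -> R) :
  \sum_(z : {ffun 'I_n -> Omega}) path_prob q P z * F (val (fgraph z)) = Ex P q n F.
Proof.
elim: n q F => [|n IH] q F.
  by rewrite sum_ffun0 fgraph0 /= mul1r.
rewrite sum_fcons; apply: eq_bigr => x _.
under eq_bigr do rewrite path_prob_fcons fgraph_fcons -mulrA.
by rewrite -mulr_sumr (IH (P x) (fun s => F (x :: s))).
Qed.

Section Mix.
Variables (R : realType) (Omega : finType) (P : Omega -> Omega -> R) (mu : Omega -> R).
Hypothesis Pst : is_stochastic P.
Hypothesis Hmu : is_stationary P mu.

Definition ell (p q : Omega -> R) := \sum_y `|p y - q y|.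
Definition emix k := \big[Num.max/0]_x ell (Ppow P k x) mu.

Lemma ell_ge0 p q : 0 <= ell p q.
Proof. by apply: sumr_ge0 => y _. Qed.

Lemma emix_ge0 k : 0 <= emix k.
Proof. exact: bigmax_ge_id. Qed.

Lemma ell_le_emix k x : ell (Ppow P k x) mu <= emix k.
Proof. by rewrite /emix; apply: le_bigmax. Qed.

Lemma emix_le2 k : emix k <= 2.
Proof.
apply: bigmax_le => // x _.
rewrite /ell (le_trans (ler_sum _ (fun y _ => ler_normB _ _))) //.
case: (Ppow_distr Pst k x) => p0 p1; case: Hmu => [[m0 m1] _].
rewrite big_split /=.
rewrite (eq_bigr _ (fun y _ => ger0_norm (p0 y))).
rewrite (eq_bigr _ (fun y _ => ger0_norm (m0 y))).
by rewrite p1 m1.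
Qed.

Lemma emix_sub s t : emix (s + t) <= emix s * emix t.
Proof.
apply: bigmax_le; first by rewrite mulr_ge0 ?emix_ge0.
move=> x _; rewrite /ell.
have E w : Ppow P (s + t) x w - mu w =
    \sum_z (Ppow P s x z - mu z) * (Ppow P t z w - mu w).
  rewrite Ppow_add.
  have -> : \sum_z (Ppow P s x z - mu z) * (Ppow P t z w - mu w) =
    \sum_z Ppow P s x z * Ppow P t z w - \sum_z mu z * Ppow P t z w
      - (\sum_z Ppow P s x z - \sum_z mu z) * mu w.
    have H z : (Ppow P s x z - mu z) * (Ppow P t z w - mu w) = Ppow P s x z * Ppow P t z w - mu z * Ppow P t z w - (Ppow P s x z - mu z) * mu w by ring.
    under eq_bigr do rewrite H.
    by rewrite !sumrB -mulr_suml sumrB.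
  rewrite (stat_pow t w Hmu).
  case: (Ppow_distr Pst s x) => _ ->; case: Hmu => [[_ ->] _].
  by rewrite subrr mul0r subr0.
under eq_bigr do rewrite E.
apply: (le_trans (ler_sum _ (fun w _ => ler_norm_sum _ _ _))).
rewrite exchange_big /=.
under eq_bigr do under eq_bigr do rewrite normrM.
under eq_bigr do rewrite -mulr_sumr.
apply: (@le_trans _ _ (\sum_z `|Ppow P s x z - mu z| * emix t)).
  apply: ler_sum => z _; apply: ler_wpM2l; first exact: normr_ge0.
  exact: ell_le_emix.
rewrite -mulr_suml; apply: ler_wpM2r; first exact: emix_ge0.
exact: ell_le_emix.
Qed.


Lemma ell_tv p q : ell p q <= 2 * tv_dist p q.
Proof.
pose A : {set Omega} := [set y | q y <= p y].
have tvA (B : {set Omega}) : `|\sum_(y in B) p y - \sum_(y in B) q y| <= tv_dist p q.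
  by rewrite /tv_dist; apply: le_bigmax.
rewrite /ell (bigID (mem A)) /= mulr2n mulrDl mul1r; apply: lerD.
  apply: le_trans (tvA A); rewrite -sumrB.
  apply: le_trans (ler_norm _); rewrite le_eqVlt; apply/orP; left; apply/eqP.
  apply: eq_bigr => y; rewrite inE => H; rewrite ger0_norm // subr_ge0.
  exact: H.
apply: le_trans (tvA (~: A)); rewrite -sumrB.
rewrite [X in _ <= `|X|](eq_bigl (fun y => y \notin A)); last by move=> y; rewrite inE.
rewrite ler_normr; apply/orP; right.
rewrite -sumrN; rewrite le_eqVlt; apply/orP; left; apply/eqP.
apply: eq_bigr => y; rewrite inE -ltNge => H; rewrite ltr0_norm ?subr_lt0 //.
Qed.

Lemma emix_tau tau : is_tau_mix P mu tau -> emix tau <= 2^-1.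
Proof.
move=> [Hd _]; apply: bigmax_le => // x _.
apply: le_trans (ell_tv _ _) _.
have : tv_dist (Ppow P tau x) mu <= d_mix P mu tau.
  by rewrite /d_mix; apply: le_bigmax.
move=> H; have := le_trans H Hd => H2.
have -> : (2^-1 : R) = 2 * 4^-1 by field.
by apply: ler_wpM2l.
Qed.

Lemma emix_geo tau j r : emix tau <= 2^-1 -> emix (j * tau + r) <= 2 * (2^-1) ^+ j.
Proof.
move=> Ht; elim: j => [|j IH]; first by rewrite mul0n add0n expr0 mulr1 emix_le2.
rewrite mulSn -addnA; apply: le_trans (emix_sub _ _) _.
rewrite exprS mulrCA; apply: ler_pM => //; exact: emix_ge0.
Qed.

Lemma emix_sum tau n : is_tau_mix P mu tau -> \sum_(k < n) emix k <= 4 * tau%:R.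
Proof.
move=> Htm; have Ht := emix_tau Htm.
case: tau Htm Ht => [|tau] Htm Ht.
  have Z k : emix k = 0.
    have := emix_sub k 0; rewrite addn0 => H.
    have H2 : emix k * emix 0 <= emix k * 2^-1 by apply: ler_wpM2l => //; exact: emix_ge0.
    have := emix_ge0 k; lra.
  by rewrite big1 ?mulr0.
have Hm m : \sum_(0 <= k < tau.+1 * m) emix k <= 4 * tau.+1%:R * (1 - (2^-1) ^+ m).
  elim: m => [|m IH]; first by rewrite muln0 big_geq // expr0 subrr mulr0.
  rewrite mulnS addnC (big_cat_nat (n := tau.+1 * m)) ?leq_addr //=.
  have -> : \sum_(tau.+1 * m <= i < tau.+1 * m + tau.+1) emix i = \sum_(0 <= i < tau.+1) emix (i + tau.+1 * m).
    by rewrite -{1}[(tau.+1 * m)%N]add0n big_addn addKn.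
  have B : \sum_(0 <= i < tau.+1) emix (i + tau.+1 * m) <= tau.+1%:R * (2 * (2^-1) ^+ m).
    apply: (@le_trans _ _ (\sum_(0 <= i < tau.+1) (2 * (2^-1 : R) ^+ m))).
      by apply: ler_sum_nat => i _; rewrite mulnC addnC; apply: emix_geo.
    by rewrite sumr_const_nat subn0 [X in _ <= X]mulrC mulr_natr.
  apply: le_trans (lerD IH B) _.
  rewrite exprS; set a := (2^-1 : R) ^+ m; set b := (tau.+1%:R : R).
  have : 0 <= b by rewrite /b.
  move=> _; rewrite le_eqVlt; apply/orP; left; apply/eqP; by field.
apply: (@le_trans _ _ (\sum_(0 <= k < (tau.+1 * n)%N) emix k)).
  rewrite -(big_mkord xpredT) (big_nat_widen _ _ (tau.+1 * n)%N) ?leq_pmull //.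
  rewrite big_mkcond /=; apply: ler_sum_nat => i _.
  by case: ifP => _; [|exact: emix_ge0].
apply: le_trans (Hm n) _; rewrite ler_piMr ?mulr_ge0 //.

Qed.
End Mix.

Section Core.
Variables (R : realType) (Omega : finType) (P : Omega -> Omega -> R) (mu : Omega -> R).
Hypothesis Pst : is_stochastic P.
Hypothesis Hmu : is_stationary P mu.
Variables (kap : Omega -> Omega -> R) (D : R).
Hypothesis D0 : 0 <= D.
Hypothesis Hk0 : forall x, \sum_y mu y * kap x y = 0.
Hypothesis HkD : forall x y, `|kap x y| <= D.

Fixpoint Qr (s : seq Omega) : R :=
  match s with [::] => 0 | x :: s' => kap x x + 2 * \sum_(y <- s') kap x y + Qr s' end.

Lemma kbound k x : `|\sum_y Ppow P k x y * kap x y| <= D * emix P mu k.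
Proof.
rewrite -[X in `|X|]subr0 -{2}(Hk0 x) -sumrB.
under eq_bigr do rewrite -mulrBl.
apply: le_trans (ler_norm_sum _ _ _) _.
under eq_bigr do rewrite normrM.
apply: (@le_trans _ _ (\sum_y `|Ppow P k x y - mu y| * D)).
  by apply: ler_sum => y _; apply: ler_wpM2l => //; exact: normr_ge0.
rewrite -mulr_suml mulrC; apply: ler_wpM2l => //.
exact: ell_le_emix.
Qed.

Lemma core q n : is_distr q ->
  Ex P q n Qr <= 2 * D * n%:R * \sum_(k < n) emix P mu k.
Proof.
elim: n q => [|n IH] q qd; first by rewrite /= mulr0 mul0r.
rewrite /=.
set S := \sum_(k < n.+1) emix P mu k.
have eS : 0 <= S by apply: sumr_ge0 => k _; exact: emix_ge0.
have Bx x : Ex P (P x) n (fun s => Qr (x :: s)) <= 2 * D * S + 2 * D * n%:R * S.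
  rewrite /= ExD ExD ExZ (Ex_const _ _ _ (Pst x)).
  rewrite (Ex_marg Pst _ _ (Pst x)).
  have H1 : kap x x <= D * emix P mu 0.
    apply: le_trans (ler_norm _) _; apply: le_trans (kbound 0 x).
    rewrite /= (bigD1 x) //= eqxx mul1r big1 ?addr0 // => u /negbTE.
    by rewrite eq_sym => ->; rewrite mul0r.
  have H2 : \sum_(k < n) \sum_y (\sum_u P x u * Ppow P k u y) * kap x y
      <= \sum_(k < n) D * emix P mu k.+1.
    apply: ler_sum => k _; under eq_bigr do rewrite -PpowS.
    by apply: le_trans (ler_norm _) _; apply: kbound.
  have H3 := IH (P x) (Pst x).
  have H4 : \sum_(k < n) emix P mu k <= S.
    rewrite /S big_ord_recr /= lerDl; exact: emix_ge0.
  have H5 : D * emix P mu 0 + 2 * \sum_(k < n) D * emix P mu k.+1 <= 2 * D * S.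
    rewrite /S big_ord_recl -mulr_sumr.
    have E : \sum_(i < n) emix P mu (bump 0 i) = \sum_(i < n) emix P mu i.+1 by [].
    rewrite E.
    have hb : 0 <= \sum_(i < n) emix P mu i.+1 by apply: sumr_ge0 => i _; exact: emix_ge0.
    have ha := emix_ge0 P mu 0.
    move: hb ha; move: (emix P mu 0) (\sum_(i < n) emix P mu i.+1) => a b hb ha.
    have := mulr_ge0 D0 ha; lra.
  have H6 : 2 * D * n%:R * \sum_(k < n) emix P mu k <= 2 * D * n%:R * S.
    apply: ler_wpM2l => //; apply: mulr_ge0 => //; apply: mulr_ge0 => //.
  lra.
  exact: Pst.
apply: (@le_trans _ _ (\sum_x q x * (2 * D * S + 2 * D * n%:R * S))).
  apply: ler_sum => x _; apply: ler_wpM2l => //; first by case: qd.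
rewrite -mulr_suml; case: qd => _ ->; rewrite mul1r.
rewrite le_eqVlt; apply/orP; left; apply/eqP.
rewrite -[(n.+1)%:R]natr1; ring.
Qed.

End Core.

Section Vec.
Variables (R : realType) (d : nat).

Definition dot (u v : 'rV[R]_d) : R := \sum_i u ord0 i * v ord0 i.

Lemma dotC u v : dot u v = dot v u.
Proof. by apply: eq_bigr => i _; rewrite mulrC. Qed.

Lemma dotDr u v w : dot u (v + w) = dot u v + dot u w.
Proof. by rewrite /dot -big_split; apply: eq_bigr => i _; rewrite mxE mulrDr. Qed.

Lemma dotDl u v w : dot (v + w) u = dot v u + dot w u.
Proof. by rewrite dotC dotDr dotC (dotC w). Qed.

Lemma dotZr u c v : dot u (c *: v) = c * dot u v.
Proof. by rewrite /dot mulr_sumr; apply: eq_bigr => i _; rewrite mxE mulrCA. Qed.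

Lemma dotZl u c v : dot (c *: v) u = c * dot v u.
Proof. by rewrite dotC dotZr dotC. Qed.

Lemma dotNr u v : dot u (- v) = - dot u v.
Proof. by rewrite -scaleN1r dotZr mulN1r. Qed.

Lemma dotNl u v : dot (- v) u = - dot v u.
Proof. by rewrite dotC dotNr dotC. Qed.

Lemma dot_sumr (I : Type) (r : seq I) (F : I -> 'rV[R]_d) u :
  dot u (\sum_(i <- r) F i) = \sum_(i <- r) dot u (F i).
Proof.
rewrite /dot; under eq_bigr do rewrite summxE mulr_sumr.
exact: exchange_big.
Qed.

Lemma dot_ge0 u : 0 <= dot u u.
Proof. by apply: sumr_ge0 => i _; rewrite -expr2 sqr_ge0. Qed.

Lemma enorm_sq (u : 'rV[R]_d) : enorm u ^+ 2 = dot u u.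
Proof.
rewrite /enorm sqr_sqrtr; last by apply: sumr_ge0 => i _; rewrite sqr_ge0.
by apply: eq_bigr => i _; rewrite expr2.
Qed.

Lemma enorm_ge0 (u : 'rV[R]_d) : 0 <= enorm u.
Proof. exact: sqrtr_ge0. Qed.

Lemma dot_abs u v : `|dot u v| <= (dot u u + dot v v) / 2.
Proof.
rewrite /dot; apply: le_trans (ler_norm_sum _ _ _) _.
rewrite -big_split /= mulr_suml; apply: ler_sum => i _.
set a := u ord0 i; set b := v ord0 i.
rewrite ler_norml; apply/andP; split.
  have := sqr_ge0 (a + b); nra.
have := sqr_ge0 (a - b); nra.
Qed.

Lemma dot_sub u v : dot (u - v) (u - v) <= 2 * dot u u + 2 * dot v v.
Proof.
rewrite /dot !mulr_sumr -big_split /=; apply: ler_sum => i _.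
rewrite !mxE; have := sqr_ge0 (u ord0 i + v ord0 i); nra.
Qed.

Lemma jensen (I : finType) (w : I -> R) (t : I -> R) :
  (forall i, 0 <= w i) -> \sum_i w i = 1 ->
  (\sum_i w i * t i) ^+ 2 <= \sum_i w i * t i ^+ 2.
Proof.
move=> w0 w1; set M := \sum_i w i * t i.
have H : 0 <= \sum_i w i * (t i - M) ^+ 2.
  by apply: sumr_ge0 => i _; apply: mulr_ge0 => //; exact: sqr_ge0.
have E : \sum_i w i * (t i - M) ^+ 2 =
   \sum_i w i * t i ^+ 2 - 2 * M * \sum_i w i * t i + M ^+ 2 * \sum_i w i.
  rewrite (eq_bigr (fun i => (w i * t i ^+ 2 - 2 * M * (w i * t i)) + M ^+ 2 * w i)); last by move=> i _; ring.
  by rewrite big_split /= sumrB -!mulr_sumr.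
rewrite E w1 -/M in H; lra.
Qed.

Lemma dot_jensen (I : finType) (w : I -> R) (a : I -> 'rV[R]_d) :
  (forall i, 0 <= w i) -> \sum_i w i = 1 ->
  dot (\sum_i w i *: a i) (\sum_i w i *: a i) <= \sum_i w i * dot (a i) (a i).
Proof.
move=> w0 w1; rewrite /dot.
under [X in _ <= X]eq_bigr do rewrite mulr_sumr.
rewrite exchange_big /=; apply: ler_sum => c _.
rewrite summxE (eq_bigr (fun k => w k * a k ord0 c)); last by move=> k _; rewrite mxE.
rewrite -expr2; apply: le_trans (jensen _ w0 w1) _.
by apply: ler_sum => i _; rewrite expr2.
Qed.

End Vec.

Section Grad.
Variables (R : realType) (Omega : finType) (d : nat).
Variables (mu : Omega -> R) (f : Omega -> 'rV[R]_d -> R).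

Lemma derive_lsum (r : seq Omega) w v : (forall z, derivable (f z) w v) ->
  derivable (fun w => \sum_(z <- r) mu z * f z w) w v /\
  'D_v (fun w => \sum_(z <- r) mu z * f z w) w = \sum_(z <- r) mu z * 'D_v (f z) w.
Proof.
move=> Hd; elim: r => [|x r [IH1 IH2]].
  have -> : (fun w => \sum_(z <- [::]) mu z * f z w) = cst 0.
    by apply: funext => u; rewrite big_nil.
  by rewrite big_nil; split; [exact: derivable_cst|exact: derive_cst].
have -> : (fun w => \sum_(z <- x :: r) mu z * f z w) =
   (mu x \*: f x) + (fun w => \sum_(z <- r) mu z * f z w).
  by apply: funext => u; rewrite big_cons.
have D1 : derivable (mu x \*: f x) w v by apply: derivableZ.
split; first exact: derivableD.
by rewrite deriveD // deriveZ // big_cons IH2.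
Qed.

Lemma grad_Fobj w : (forall z, differentiable (f z) w) ->
  grad (Fobj mu f) w = \sum_z mu z *: grad (f z) w.
Proof.
move=> Hd; apply/rowP => i; rewrite !mxE summxE.
under [RHS]eq_bigr do rewrite !mxE.
have H z : derivable (f z) w (delta_mx ord0 i) by apply: diff_derivable.
exact: (proj2 (derive_lsum (index_enum Omega) H)).
Qed.

End Grad.

Section Esum.
Variable R : realType.

Lemma sub_sum_le (T : eqType) (s t : seq T) (F : T -> R) :
  uniq s -> uniq t -> {subset s <= t} -> (forall x, 0 <= F x) ->
  \sum_(x <- s) F x <= \sum_(x <- t) F x.
Proof.
move=> us ut st F0.
have pe : perm_eq s [seq x <- t | x \in s].
  apply: uniq_perm => //; first exact: filter_uniq.
  by move=> x; rewrite mem_filter; case: (boolP (x \in s)) => // /st ->.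
rewrite (perm_big _ pe) big_filter /= [X in _ <= X](bigID (fun x => x \in s)) /=.
by rewrite lerDl; apply: sumr_ge0.
Qed.

Lemma geo_sum M : \sum_(k < M) (2 ^+ k.+1 : R)^-1 <= 1.
Proof.
suff : \sum_(k < M) (2 ^+ k.+1 : R)^-1 = 1 - (2 ^+ M)^-1.
  by move=> ->; rewrite lerBlDr lerDl invr_ge0 exprn_ge0.
elim: M => [|M IH]; first by rewrite big_ord0 expr0 invr1 subrr.
rewrite big_ord_recr /= IH exprS.
have h : (2 : R) ^+ M != 0 by rewrite expf_neq0.
field; by rewrite h.
Qed.

Lemma Nprob_ge0 m (j : {ffun 'I_m -> nat}) : 0 <= Nprob R j.
Proof. by apply: prodr_ge0 => i _; rewrite invr_ge0 exprn_ge0. Qed.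

Lemma Nprob_sum m (s : seq {ffun 'I_m -> nat}) : uniq s -> \sum_(j <- s) Nprob R j <= 1.
Proof.
move=> us.
have [K HM] : exists K, forall j i, j \in s -> (j i < K.+1)%N.
  exists (\sum_(j <- s) \sum_i j i)%N => j i js.
  by rewrite ltnS (big_rem _ js) /= (bigD1 i) //= -addnA leq_addr.

pose g (b : {ffun 'I_m -> 'I_K.+1}) : {ffun 'I_m -> nat} := [ffun i => val (b i)].
have ginj : injective g.
  move=> b1 b2 /ffunP H; apply/ffunP => i; apply: val_inj; have := H i; by rewrite !ffunE.
apply: (@le_trans _ _ (\sum_(j <- map g (enum {ffun 'I_m -> 'I_K.+1})) Nprob R j)).
  apply: sub_sum_le => //; first by rewrite map_inj_uniq ?enum_uniq.
    move=> j js; apply/mapP; exists [ffun i => inord (j i)]; first by rewrite mem_enum.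
    apply/ffunP => i; rewrite /g !ffunE; apply/esym/inordK; rewrite -ltnS; exact: HM.
  exact: Nprob_ge0.
rewrite big_map big_enum /=.
have E b : Nprob R (g b) = \prod_i (2 ^+ (val (b i)).+1 : R)^-1.
  by apply: eq_bigr => i _; rewrite ffunE.
under eq_bigr do rewrite E.
rewrite -(bigA_distr_bigA (fun (i : 'I_m) (k : 'I_K.+1) => (2 ^+ (val k).+1 : R)^-1)).
set X := \prod_i _.
suff /andP[] : 0 <= X <= 1 by [].
rewrite /X; apply: (big_ind (fun x : R => 0 <= x <= 1)) => [|x y /andP[x0 x1] /andP[y0 y1]|i _].
- by rewrite ler01 lexx.
- by apply/andP; split; [exact: mulr_ge0 | exact: mulr_ile1].
- apply/andP; split; last exact: geo_sum.
  by apply: sumr_ge0 => k _; rewrite invr_ge0 exprn_ge0.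
Qed.


Lemma expect_le (Omega : finType) p0 (P : Omega -> Omega -> R) m L X (B : R) :
  0 <= B ->
  (forall j, 0 <= \sum_(z : {ffun 'I_(L j) -> Omega}) path_prob p0 P z * X j z) ->
  (forall j, \sum_(z : {ffun 'I_(L j) -> Omega}) path_prob p0 P z * X j z <= B) ->
  (expect p0 P m L X <= B%:E)%E.
Proof.
move=> B0 H0 HB; rewrite /expect /esum; apply: ge_ereal_sup => _ [A [finA _] <-].
rewrite fsumEFin // lee_fin fsbig_finite //=.
apply: le_trans (ler_sum _ (fun j _ => ler_wpM2l (Nprob_ge0 j) (HB j))) _.
rewrite -mulr_suml; rewrite -[X in _ <= X]mul1r; apply: ler_wpM2r => //.
apply: Nprob_sum; exact: finmap.fset_uniq.
Qed.
End Esum.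

Section Final.
Variables (R : realType) (Omega : finType) (P : Omega -> Omega -> R) (mu : Omega -> R).
Hypothesis Pst : is_stochastic P.
Hypothesis Hmu : is_stationary P mu.

Lemma Ex_ge0 q n F : is_distr q -> (forall s, size s = n -> 0 <= F s) -> 0 <= Ex P q n F.
Proof.
move=> qd H; rewrite -(Ex_const Pst n 0 qd); apply: Ex_le => //.
by case: qd.
Qed.

Lemma Ex_jensen q n X : is_distr q -> Ex P q n X ^+ 2 <= Ex P q n (fun s => X s ^+ 2).
Proof.
move=> qd; set M := Ex P q n X.
have H : 0 <= Ex P q n (fun s => X s ^+ 2 + ((- 2 * M) * X s + M ^+ 2)).
  apply: Ex_ge0 => // s _.
  have -> : X s ^+ 2 + ((- 2 * M) * X s + M ^+ 2) = (X s - M) ^+ 2 by ring.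
  exact: sqr_ge0.
rewrite ExD ExD ExZ Ex_const // -/M in H; lra.
Qed.

Variable d : nat.

Lemma sum_sub_const (s : seq Omega) (a : Omega -> 'rV[R]_d) m :
  \sum_(x <- s) (a x - m) = \sum_(x <- s) a x - (size s)%:R *: m.
Proof.
elim: s => [|x s IH]; first by rewrite !big_nil scale0r subr0.
rewrite !big_cons IH /= -natr1 scalerDl scale1r.
by rewrite addrACA opprD; congr (_ + _); rewrite addrC.
Qed.

Lemma Qr_dot (h : Omega -> 'rV[R]_d) s :
  dot (\sum_(x <- s) h x) (\sum_(x <- s) h x) = Qr (fun x y => dot (h x) (h y)) s.
Proof.
elim: s => [|x s IH]; first by rewrite big_nil /dot big1 // => i _; rewrite mxE mul0r.
rewrite big_cons /= dotDl !dotDr IH dot_sumr (dotC _ (h x)) dot_sumr.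
ring.
Qed.

Variable tau : nat.
Hypothesis Htm : is_tau_mix P mu tau.

Lemma inner q (qd : is_distr q) (a : Omega -> 'rV[R]_d) G (HG : forall x, enorm (a x) <= G)
  N (N0 : (0 < N)%N) :
  Ex P q N (fun win => enorm (N%:R^-1 *: \sum_(x <- win) a x - \sum_u mu u *: a u) ^+ 2)
   <= 32 * G ^+ 2 * tau%:R / N%:R.
Proof.
set m := \sum_u mu u *: a u.
pose h x := a x - m.
pose kap x y := dot (h x) (h y).
have [[mu0 mu1] _] := Hmu.
have aa x : dot (a x) (a x) <= G ^+ 2.
  rewrite -enorm_sq; apply: lerXn2r; rewrite ?nnegrE ?enorm_ge0 //.
  exact: (le_trans (enorm_ge0 (a x)) (HG x)).
have mm : dot m m <= G ^+ 2.
  apply: le_trans (dot_jensen _ mu0 mu1) _.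
  apply: (@le_trans _ _ (\sum_u mu u * G ^+ 2)).
    by apply: ler_sum => u _; apply: ler_wpM2l.
  by rewrite -mulr_suml mu1 mul1r.
have hh x : dot (h x) (h x) <= 4 * G ^+ 2.
  apply: le_trans (dot_sub _ _) _; have := aa x; lra.
have Hk0 x : \sum_y mu y * kap x y = 0.
  rewrite /kap; under eq_bigr do rewrite -dotZr.
  rewrite -dot_sumr.
  have -> : \sum_y mu y *: h y = 0.
    rewrite /h; under eq_bigr do rewrite scalerBr.
    by rewrite sumrB -scaler_suml mu1 scale1r subrr.
  by rewrite /dot big1 // => i _; rewrite !mxE mulr0.
have HkD x y : `|kap x y| <= 4 * G ^+ 2.
  apply: le_trans (dot_abs _ _) _; have := hh x; have := hh y; lra.
have D0 : 0 <= 4 * G ^+ 2 by rewrite mulr_ge0 ?sqr_ge0.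
have Nn : (N%:R : R) != 0 by rewrite pnatr_eq0 -lt0n.
rewrite (@Ex_ext R Omega P q N _ (fun s => N%:R^-2 * Qr kap s)); last first.
  move=> s Hs; rewrite enorm_sq.
  have -> : N%:R^-1 *: \sum_(x <- s) a x - m = N%:R^-1 *: \sum_(x <- s) h x.
    rewrite sum_sub_const Hs scalerBr scalerA mulVf // scale1r //.
  by rewrite dotZl dotZr Qr_dot mulrA -expr2 exprVn.
rewrite ExZ.
have C := @core R Omega P mu Pst kap _ D0 Hk0 HkD q N qd.
have S := emix_sum Pst Hmu N Htm.
have Nr : (0 : R) < N%:R by rewrite ltr0n.
have e0 : 0 <= \sum_(k < N) emix P mu k by apply: sumr_ge0 => k _; exact: emix_ge0.
apply: (@le_trans _ _ (N%:R^-2 * (2 * (4 * G ^+ 2) * N%:R * (4 * tau%:R)))).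
  apply: ler_wpM2l; first by rewrite invr_ge0 exprn_ge0 // ler0n.
  apply: le_trans C _; apply: ler_wpM2l => //.
  by apply: mulr_ge0; [apply: mulr_ge0|rewrite ler0n].
rewrite le_eqVlt; apply/orP; left; apply/eqP.
field; exact: Nn.
Qed.

End Final.

Theorem lemmaA6 :
  exists (c a : nat),
  forall (R : realType) (Omega : finType) (P : Omega -> Omega -> R)
    (p0 mu : Omega -> R) (tau : nat) (d : nat) (Kset : set 'rV[R]_d)
    (f : Omega -> 'rV[R]_d -> R) (G : R) (T N t : nat)
    (W : seq nat -> seq Omega -> 'rV[R]_d),
    ergodic P -> is_distr p0 -> is_stationary P mu -> is_tau_mix P mu tau ->
    (forall z w, differentiable (f z) w) ->
    (forall w z, Kset w -> enorm (grad (f z) w) <= G) ->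
    (2 <= T)%N -> (1 <= N <= T)%N -> (1 <= t)%N ->
    (forall ns zs, Kset (W ns zs)) ->
    let m := t.-1 in
    let K : R := tau%:R * (Num.ceil (2 * (ln (T%:R : R) / ln 2)))%:~R in
    let polylog : R := ln (T%:R + K + N%:R + 2) ^+ a in
    let err := fun (j : {ffun 'I_m -> nat}) (z : {ffun 'I_(Ssum j + N) -> Omega}) =>
      enorm (g_tN f W N j z - grad (Fobj mu f) (w_t W j z)) in
    (expect p0 P m (fun j => (Ssum j + N)%N) err
       <= (c%:R * (G * Num.sqrt (K / N%:R)) * polylog)%:E)%E /\
    (expect p0 P m (fun j => (Ssum j + N)%N) (fun j z => (err j z ^+ 2)%R)
       <= (c%:R * (G ^+ 2 * K / N%:R) * polylog)%:E)%E.
Proof.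
exists 32%N, 0%N.
move=> R Omega P p0 mu tau d Kset f G T N t W [Pst _] Hp0 Hmu Htm Hdiff HG HT
  /andP[HN1 HNT] Ht HW m K polylog err.
rewrite /polylog expr0 !mulr1.
have N0 : (0 < N)%N by [].
have Nr : (0 : R) < N%:R by rewrite ltr0n.
have [z0 _] : exists z : Omega, true.
  case: (pickP (@predT Omega)) => [z _|H]; first by exists z.
  exfalso; case: Hp0 => _; rewrite big_pred0 // => /eqP; by rewrite eq_sym oner_eq0.
have G0 : 0 <= G.
  exact: (le_trans (enorm_ge0 _) (HG _ z0 (HW [::] [::]))).
have Kt : (tau%:R : R) <= K.
  have lnT : (0 : R) < ln (T%:R : R) by apply: ln_gt0; rewrite ltr1n.
  have ln2 : (0 : R) < ln 2 by apply: ln_gt0; lra.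
  have x0 : (0 : R) < 2 * (ln (T%:R : R) / ln 2) by rewrite mulr_gt0 // divr_gt0.
  have := ceil_ge (2 * (ln (T%:R : R) / ln 2)).
  move: x0; set c := Num.ceil _ => x0 cge.
  have c0 : (0 : R) < c%:~R by apply: lt_le_trans cge.
  have c1 : (1 : R) <= c%:~R.
    rewrite ler1z; rewrite ltr0z in c0; lia.
  rewrite /K; rewrite -[X in X <= _]mulr1; apply: ler_wpM2l => //.
have K0 : 0 <= K by apply: le_trans Kt; rewrite ler0n.
set B2 := 32 * G ^+ 2 * tau%:R / N%:R.
set B1 := 32 * (G * Num.sqrt (K / N%:R)).
have B1ge : 0 <= B1 by rewrite mulr_ge0 // mulr_ge0 // sqrtr_ge0.
have B2le : B2 <= 32 * (G ^+ 2 * K / N%:R).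
  have g2 : 0 <= 32 * (G ^+ 2 / N%:R) by rewrite mulr_ge0 // divr_ge0 ?sqr_ge0 ?ler0n.
  have -> : B2 = 32 * (G ^+ 2 / N%:R) * tau%:R by rewrite /B2; ring.
  have -> : 32 * (G ^+ 2 * K / N%:R) = 32 * (G ^+ 2 / N%:R) * K by ring.
  exact: ler_wpM2l.
have B2B1 : B2 <= B1 ^+ 2.
  rewrite /B1 !exprMn sqr_sqrtr; last by rewrite divr_ge0 // ler0n.
  apply: le_trans B2le _.
  have h1 : 0 <= G ^+ 2 * K / N%:R by rewrite divr_ge0 ?ler0n // mulr_ge0 // sqr_ge0.
  rewrite mulrA; move: h1; lra.
pose Fe (j : {ffun 'I_m -> nat}) (s : seq Omega) :=
  enorm (N%:R^-1 *: \sum_(x <- drop (Ssum j) s) grad (f x) (W (Ns j) (take (Ssum j) s))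
     - grad (Fobj mu f) (W (Ns j) (take (Ssum j) s))).
have inn j pre : size pre = Ssum j ->
  forall q, is_distr q ->
  Ex P q N (fun win => Fe j (pre ++ win) ^+ 2) <= B2 /\ Ex P q N (fun win => Fe j (pre ++ win)) <= B1.
  move=> Hs q qd.
  pose a x := grad (f x) (W (Ns j) pre).
  have Ha x : enorm (a x) <= G by apply: HG; apply: HW.
  have E win : Fe j (pre ++ win) = enorm (N%:R^-1 *: \sum_(x <- win) a x - \sum_u mu u *: a u).
    by rewrite /Fe -Hs take_size_cat // drop_size_cat // grad_Fobj.
  have I2 : Ex P q N (fun win => Fe j (pre ++ win) ^+ 2) <= B2.
    rewrite (@Ex_ext R Omega P q N _ (fun win => enorm (N%:R^-1 *: \sum_(x <- win) a x - \sum_u mu u *: a u) ^+ 2)); last by move=> s _; rewrite E.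
    exact: (inner Pst Hmu Htm qd Ha N0).
  split => //.
  have J := Ex_jensen Pst N (fun win => Fe j (pre ++ win)) qd.
  have J2 := le_trans J (le_trans I2 B2B1).
  move: J2 B1ge; set X := Ex _ _ _ _; nra.
split.
- apply: expect_le => // j.
    rewrite (Ex_path P p0 (Ssum j + N) (Fe j)).
    by apply: Ex_ge0 => // s _; exact: enorm_ge0.
  rewrite (Ex_path P p0 (Ssum j + N) (Fe j)) Ex_split.
  rewrite -(Ex_const Pst (Ssum j) B1 Hp0); apply: Ex_le => //; first by case: Hp0.
  move=> s Hs; apply: (proj2 (inn j s Hs _ _)); exact: nxt_distr.
- apply: expect_le.
  + by rewrite mulr_ge0 // divr_ge0 ?ler0n // mulr_ge0 // sqr_ge0.
  + move=> j; rewrite (Ex_path P p0 (Ssum j + N) (fun s => Fe j s ^+ 2)).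
    by apply: Ex_ge0 => // s _; exact: sqr_ge0.
  move=> j; rewrite (Ex_path P p0 (Ssum j + N) (fun s => Fe j s ^+ 2)) Ex_split.
  apply: le_trans B2le.
  rewrite -(Ex_const Pst (Ssum j) B2 Hp0); apply: Ex_le => //; first by case: Hp0.
  move=> s Hs; apply: (proj1 (inn j s Hs _ _)); exact: nxt_distr.
Qed.
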